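(* Let $A$ and $B$ be Banach algebras and $\phi$ a nonzero character on $A$. If $A\oplus_\phi B$ is weakly amenable, then $A$ is weakly amenable and $B$ is cyclically amenable, i.e. $\mathcal H^1_c(B,B^* )=0$.
   Context: For Banach algebras $A,B$ and a nonzero character $\phi$ on $A$, the $\phi$-Lau product $A\oplus_\phi B$ is the Banach space $\{(a,b):a\in A,b\in B\}$ with norm $\|a\|+\|b\|$ and product $(a,b)(a',b')=(aa',\ \phi(a)b'+\phi(a')b+bb')$. For a Banach algebra $C$, $C^*$ is a $C$-bimodule via $\langle c\cdot f,x\rangle=f(xc)$, $\langle f\cdot c,x\rangle=f(cx)$; $C$ is weakly amenable if every bounded derivation $D:C\to C^*$ ($D(xy)=x\cdot D(y)+D(x)\cdot y$) is inner ($D(c)=c\cdot f-f\cdot c$ for some $f\in C^*$). A derivation $D:C\to C^*$ is cyclic if $\langle x,D(y)\rangle+\langle y,D(x)\rangle=0$ for all $x,y\in C$; $\mathcal H^1_c(C,C^* )$ is the space of bounded cyclic derivations modulo inner derivations. *)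

(* Defs.v *)
From Stdlib Require Import Reals.
Open Scope R_scope.

Record Cx := mkC { re : R; im : R }.
Definition C0 : Cx := mkC 0 0.
Definition C1 : Cx := mkC 1 0.
Definition Cadd (z w : Cx) : Cx := mkC (re z + re w) (im z + im w).
Definition Copp (z : Cx) : Cx := mkC (- re z) (- im z).
Definition Csub (z w : Cx) : Cx := Cadd z (Copp w).
Definition Cmul (z w : Cx) : Cx :=
  mkC (re z * re w - im z * im w) (re z * im w + im z * re w).
Definition Cmod (z : Cx) : R := sqrt (re z * re z + im z * im z).

Record AlgOps := {
  ao_car :> Type;
  ao_add : ao_car -> ao_car -> ao_car;
  ao_scal : Cx -> ao_car -> ao_car;
  ao_mul : ao_car -> ao_car -> ao_car;
  ao_norm : ao_car -> R
}.
Arguments ao_add {_}. Arguments ao_scal {_}. Arguments ao_mul {_}. Arguments ao_norm {_}.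

Record BanachAlgebra := {
  ba_ops :> AlgOps;
  ba_zero : ba_ops;
  ba_opp : ba_ops -> ba_ops;
  ba_add_assoc : forall x y z : ba_ops, ao_add x (ao_add y z) = ao_add (ao_add x y) z;
  ba_add_comm : forall x y : ba_ops, ao_add x y = ao_add y x;
  ba_add_0 : forall x : ba_ops, ao_add x ba_zero = x;
  ba_add_opp : forall x : ba_ops, ao_add x (ba_opp x) = ba_zero;
  ba_scal_assoc : forall (a b : Cx) (x : ba_ops), ao_scal a (ao_scal b x) = ao_scal (Cmul a b) x;
  ba_scal_1 : forall x : ba_ops, ao_scal C1 x = x;
  ba_scal_distr_l : forall (a : Cx) (x y : ba_ops),
      ao_scal a (ao_add x y) = ao_add (ao_scal a x) (ao_scal a y);
  ba_scal_distr_r : forall (a b : Cx) (x : ba_ops),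
      ao_scal (Cadd a b) x = ao_add (ao_scal a x) (ao_scal b x);
  ba_mul_assoc : forall x y z : ba_ops, ao_mul x (ao_mul y z) = ao_mul (ao_mul x y) z;
  ba_mul_distr_l : forall x y z : ba_ops, ao_mul x (ao_add y z) = ao_add (ao_mul x y) (ao_mul x z);
  ba_mul_distr_r : forall x y z : ba_ops, ao_mul (ao_add x y) z = ao_add (ao_mul x z) (ao_mul y z);
  ba_mul_scal_l : forall (a : Cx) (x y : ba_ops), ao_mul (ao_scal a x) y = ao_scal a (ao_mul x y);
  ba_mul_scal_r : forall (a : Cx) (x y : ba_ops), ao_mul x (ao_scal a y) = ao_scal a (ao_mul x y);
  ba_norm_nonneg : forall x : ba_ops, 0 <= ao_norm x;
  ba_norm_eq0 : forall x : ba_ops, ao_norm x = 0 -> x = ba_zero;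
  ba_norm_triangle : forall x y : ba_ops, ao_norm (ao_add x y) <= ao_norm x + ao_norm y;
  ba_norm_scal : forall (a : Cx) (x : ba_ops), ao_norm (ao_scal a x) = Cmod a * ao_norm x;
  ba_norm_mul : forall x y : ba_ops, ao_norm (ao_mul x y) <= ao_norm x * ao_norm y;
  ba_complete : forall u : nat -> ba_ops,
      (forall eps, 0 < eps -> exists N, forall m n, (N <= m)%nat -> (N <= n)%nat ->
          ao_norm (ao_add (u m) (ba_opp (u n))) < eps) ->
      exists l : ba_ops, forall eps, 0 < eps -> exists N, forall n, (N <= n)%nat ->
          ao_norm (ao_add (u n) (ba_opp l)) < eps
}.

Section Derivations.
Variable A : AlgOps.

Definition dual_elem (f : A -> Cx) : Prop :=
  (forall x y : A, f (ao_add x y) = Cadd (f x) (f y)) /\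
  (forall (a : Cx) (x : A), f (ao_scal a x) = Cmul a (f x)) /\
  (exists M : R, forall x : A, Cmod (f x) <= M * ao_norm x).

(* D : A -> A^*, written curried: D c x = <x, D(c)>.
   Bounded linear map into A^* satisfying D(xy) = x.D(y) + D(x).y, where
   <z, x.g> = g(z x) and <z, g.y> = g(y z). *)
Definition bounded_derivation (D : A -> A -> Cx) : Prop :=
  (forall c : A, dual_elem (D c)) /\
  (forall (c d x : A), D (ao_add c d) x = Cadd (D c x) (D d x)) /\
  (forall (a : Cx) (c x : A), D (ao_scal a c) x = Cmul a (D c x)) /\
  (exists M : R, forall c x : A, Cmod (D c x) <= M * ao_norm c * ao_norm x) /\
  (forall (c d z : A), D (ao_mul c d) z = Cadd (D d (ao_mul z c)) (D c (ao_mul d z))).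

Definition inner_derivation (D : A -> A -> Cx) : Prop :=
  exists f : A -> Cx, dual_elem f /\
    forall c x : A, D c x = Csub (f (ao_mul x c)) (f (ao_mul c x)).

Definition cyclic_derivation (D : A -> A -> Cx) : Prop :=
  forall x y : A, Cadd (D y x) (D x y) = C0.

Definition weakly_amenable : Prop :=
  forall D : A -> A -> Cx, bounded_derivation D -> inner_derivation D.

Definition cyclically_amenable : Prop :=
  forall D : A -> A -> Cx, bounded_derivation D -> cyclic_derivation D -> inner_derivation D.

Definition character (phi : A -> Cx) : Prop :=
  (forall x y : A, phi (ao_add x y) = Cadd (phi x) (phi y)) /\
  (forall (a : Cx) (x : A), phi (ao_scal a x) = Cmul a (phi x)) /\
  (forall x y : A, phi (ao_mul x y) = Cmul (phi x) (phi y)) /\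
  (exists x : A, phi x <> C0).

End Derivations.

Definition lau_product (A B : AlgOps) (phi : A -> Cx) : AlgOps := {|
  ao_car := (ao_car A * ao_car B)%type;
  ao_add := fun p q => (ao_add (fst p) (fst q), ao_add (snd p) (snd q));
  ao_scal := fun a p => (ao_scal a (fst p), ao_scal a (snd p));
  ao_mul := fun p q =>
    (ao_mul (fst p) (fst q),
     ao_add (ao_add (ao_scal (phi (fst p)) (snd q)) (ao_scal (phi (fst q)) (snd p)))
            (ao_mul (snd p) (snd q)));
  ao_norm := fun p => ao_norm (fst p) + ao_norm (snd p)
|}.

(* Main.v *)
Require Import Defs.
From Stdlib Require Import Reals Lra.
Open Scope R_scope.

Lemma Cx_eq (z w : Cx) : re z = re w -> im z = im w -> z = w.
Proof. destruct z, w; simpl; intros; subst; reflexivity. Qed.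

Section BA.
Variable X : BanachAlgebra.

Lemma ba_cancel (x : X) : x = ao_add x x -> x = ba_zero X.
Proof.
  intros H. rewrite <- (ba_add_opp X x).
  transitivity (ao_add (ao_add x x) (ba_opp X x)); [|rewrite <- H; reflexivity].
  rewrite <- ba_add_assoc, ba_add_opp, ba_add_0. reflexivity.
Qed.

Lemma ba_add0l (x : X) : ao_add (ba_zero X) x = x.
Proof. rewrite ba_add_comm; apply ba_add_0. Qed.

Lemma ba_zero_add : ao_add (ba_zero X) (ba_zero X) = ba_zero X.
Proof. apply ba_add_0. Qed.

Lemma ba_scal_zero (a : Cx) : ao_scal a (ba_zero X) = ba_zero X.
Proof.
  apply ba_cancel. rewrite <- ba_scal_distr_l, ba_zero_add. reflexivity.
Qed.

Lemma ba_scal_C0 (x : X) : ao_scal C0 x = ba_zero X.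
Proof.
  apply ba_cancel. rewrite <- ba_scal_distr_r.
  f_equal. apply Cx_eq; simpl; ring.
Qed.

Lemma ba_mul00 : ao_mul (ba_zero X) (ba_zero X) = ba_zero X.
Proof.
  apply ba_cancel. rewrite <- ba_mul_distr_l, ba_zero_add. reflexivity.
Qed.

Lemma ba_norm0 : ao_norm (ba_zero X) = 0.
Proof.
  rewrite <- (ba_scal_zero C0), ba_norm_scal.
  unfold Cmod; simpl. replace (0*0+0*0) with 0 by ring. rewrite sqrt_0. ring.
Qed.
End BA.

Lemma bnd3 (c m p q P Q : R) : 0 <= p <= P -> 0 <= q <= Q -> c <= m * p * q ->
  c <= Rabs m * P * Q.
Proof.
  intros [h1 h2] [h3 h4] h.
  assert (m <= Rabs m) by apply RRle_abs.
  assert (0 <= Rabs m) by apply Rabs_pos.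
  assert (m * p * q <= Rabs m * p * q).
  { apply Rmult_le_compat_r; [lra|]. apply Rmult_le_compat_r; lra. }
  assert (Rabs m * p * q <= Rabs m * P * q).
  { apply Rmult_le_compat_r; [lra|]. apply Rmult_le_compat_l; lra. }
  assert (Rabs m * P * q <= Rabs m * P * Q).
  { apply Rmult_le_compat_l; [|lra]. apply Rmult_le_pos; lra. }
  lra.
Qed.

Lemma bnd2 (c m q Q : R) : 0 <= q <= Q -> c <= m * q -> c <= Rabs m * Q.
Proof.
  intros Hq h. pose proof (bnd3 c m 1 q 1 Q ltac:(lra) Hq ltac:(lra)). lra.
Qed.

Lemma char0 (A : BanachAlgebra) (phi : A -> Cx) :
  (forall x y : A, phi (ao_add x y) = Cadd (phi x) (phi y)) -> phi (ba_zero A) = C0.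
Proof.
  intros H. pose proof (H (ba_zero A) (ba_zero A)) as E.
  rewrite ba_zero_add in E. destruct (phi (ba_zero A)) as [r i].
  unfold Cadd in E; simpl in E. injection E; intros. apply Cx_eq; simpl; lra.
Qed.

Theorem corollary6p16 (A B : BanachAlgebra) (phi : A -> Cx) :
  character A phi ->
  weakly_amenable (lau_product A B phi) ->
  weakly_amenable A /\ cyclically_amenable B.
Proof.
  intros [phiadd [phiscal [phimul _]]] HW. split.
  - intros D [Ddual [Dadd [Dscal [[M HM] Dder]]]].
    set (D' := fun (c z : lau_product A B phi) =>
                 D (fst (c : ao_car A * ao_car B)) (fst (z : ao_car A * ao_car B))).
    assert (H : bounded_derivation (lau_product A B phi) D').
    { split; [|split; [|split; [|split]]].
      - intros c. destruct (Ddual (fst c)) as [h1 [h2 [M1 HM1]]].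
        split; [|split].
        + intros x y. apply h1.
        + intros a x. apply h2.
        + exists (Rabs M1). intros [x y]. unfold D'; simpl.
          apply bnd2 with (ao_norm x); [|apply HM1].
          pose proof (ba_norm_nonneg A x); pose proof (ba_norm_nonneg B y); lra.
      - intros c d x. apply Dadd.
      - intros a c x. apply Dscal.
      - exists (Rabs M). intros [a b] [x y]. unfold D'; simpl.
        apply bnd3 with (ao_norm a) (ao_norm x); [| |apply HM].
        + pose proof (ba_norm_nonneg A a); pose proof (ba_norm_nonneg B b); lra.
        + pose proof (ba_norm_nonneg A x); pose proof (ba_norm_nonneg B y); lra.
      - intros c d z. unfold D'; simpl. apply Dder. }
    destruct (HW D' H) as [f [[fadd [fscal [Mf HMf]]] Hf]].
    exists (fun a => f (a, ba_zero B)). split; [split; [|split]|].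
    + intros x y.
      replace (ao_add x y, ba_zero B) with
        (@ao_add (lau_product A B phi) (x, ba_zero B) (y, ba_zero B))
        by (simpl; rewrite ba_zero_add; reflexivity).
      apply fadd.
    + intros a x.
      replace (ao_scal a x, ba_zero B) with
        (@ao_scal (lau_product A B phi) a (x, ba_zero B))
        by (simpl; rewrite ba_scal_zero; reflexivity).
      apply fscal.
    + exists Mf. intros x. pose proof (HMf (x, ba_zero B)) as E. simpl in E.
      rewrite ba_norm0, Rplus_0_r in E. exact E.
    + intros c x. pose proof (Hf (c, ba_zero B) (x, ba_zero B)) as E.
      unfold D' in E; simpl in E.
      rewrite !ba_scal_zero, ba_mul00, !ba_zero_add in E. exact E.
  - intros D [Ddual [Dadd [Dscal [[M HM] Dder]]]] Hcyc.
    set (D' := fun (c z : lau_product A B phi) =>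
                 D (snd (c : ao_car A * ao_car B)) (snd (z : ao_car A * ao_car B))).
    assert (H : bounded_derivation (lau_product A B phi) D').
    { split; [|split; [|split; [|split]]].
      - intros c. destruct (Ddual (snd c)) as [h1 [h2 [M1 HM1]]].
        split; [|split].
        + intros x y. apply h1.
        + intros a x. apply h2.
        + exists (Rabs M1). intros [x y]. unfold D'; simpl.
          apply bnd2 with (ao_norm y); [|apply HM1].
          pose proof (ba_norm_nonneg A x); pose proof (ba_norm_nonneg B y); lra.
      - intros c d x. apply Dadd.
      - intros a c x. apply Dscal.
      - exists (Rabs M). intros [a b] [x y]. unfold D'; simpl.
        apply bnd3 with (ao_norm b) (ao_norm y); [| |apply HM].
        + pose proof (ba_norm_nonneg A a); pose proof (ba_norm_nonneg B b); lra.
        + pose proof (ba_norm_nonneg A x); pose proof (ba_norm_nonneg B y); lra.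
      - intros [a b] [a' b'] [x y]. unfold D'; simpl.
        rewrite !Dadd, !Dscal, Dder.
        destruct (Ddual b') as [a1 [s1 _]]. destruct (Ddual b) as [a2 [s2 _]].
        rewrite !a1, !s1, !a2, !s2.
        pose proof (Hcyc b b') as Hc.
        destruct (D b' b) as [u1 u2]. destruct (D b b') as [v1 v2].
        unfold Cadd, C0 in Hc. injection Hc; intros E2 E1.
        apply Cx_eq; simpl.
        + replace v1 with (- u1) by lra. replace v2 with (- u2) by lra. ring.
        + replace v1 with (- u1) by lra. replace v2 with (- u2) by lra. ring. }
    destruct (HW D' H) as [f [[fadd [fscal [Mf HMf]]] Hf]].
    exists (fun b => f (ba_zero A, b)). split; [split; [|split]|].
    + intros x y.
      replace (ba_zero A, ao_add x y) with
        (@ao_add (lau_product A B phi) (ba_zero A, x) (ba_zero A, y))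
        by (simpl; rewrite ba_zero_add; reflexivity).
      apply fadd.
    + intros a x.
      replace (ba_zero A, ao_scal a x) with
        (@ao_scal (lau_product A B phi) a (ba_zero A, x))
        by (simpl; rewrite ba_scal_zero; reflexivity).
      apply fscal.
    + exists Mf. intros x. pose proof (HMf (ba_zero A, x)) as E. simpl in E.
      rewrite ba_norm0, Rplus_0_l in E. exact E.
    + intros c x. pose proof (Hf (ba_zero A, c) (ba_zero A, x)) as E.
      unfold D' in E; simpl in E.
      rewrite (char0 A phi phiadd), !ba_scal_C0, ba_mul00, !ba_zero_add, !ba_add0l in E.
      exact E.
Qed.
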